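(* Let $R$ be the ring of upper triangular $2\times 2$ matrices over the field $\mathbb{F}_2$ (a non-commutative ring with unity of order $8$ having exactly $6$ zero-divisors, counting $0$). Consider the (left) projective line $P(R)$. Then: (i) $P(R)$ has exactly $18$ points; (ii) exactly $14$ of these points have a representative pair $(a,b)$ in which $a$ or $b$ is a unit of $R$; (iii) every point of $P(R)$ has exactly $9$ neighbours other than itself; (iv) any two distant points of $P(R)$ have exactly $4$ common neighbours; (v) any three pairwise distant points of $P(R)$ have no common neighbour; (vi) the maximum cardinality of a set of pairwise distant points of $P(R)$ is $3$. *)

(* Defs.v *)
From mathcomp Require Import all_boot all_order all_algebra.
Set Implicit Arguments. Unset Strict Implicit. Unset Printing Implicit Defensive.
Import GRing.Theory.
Local Open Scope ring_scope.

(* Ambient ring: 2x2 matrices over F_2; R is the subring of upper triangular ones. *)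
Definition T := 'M['F_2]_2.

Definition upper (x : T) : bool := x ord_max ord0 == 0.

Definition unitR (x : T) : bool :=
  upper x && [exists y : T, [&& upper y, x * y == 1 & y * x == 1]].

Definition invertible2 (a b c d : T) : bool :=
  [exists e : T, [exists f : T, [exists g : T, [exists h : T,
    [&& upper e, upper f, upper g, upper h,
        a * e + b * g == 1, a * f + b * h == 0,
        c * e + d * g == 0, c * f + d * h == 1,
        e * a + f * c == 1, e * b + f * d == 0,
        g * a + h * c == 0 & g * b + h * d == 1]]]]].

Definition admissible (a b : T) : bool :=
  [&& upper a, upper b &
      [exists c : T, [exists d : T, [&& upper c, upper d & invertible2 a b c d]]]].

Definition cyc (a b : T) : {set T * T} :=
  [set (r * a, r * b) | r in [pred r : T | upper r]].

Definition PR : {set {set T * T}} :=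
  [set cyc p.1 p.2 | p in [pred p : T * T | admissible p.1 p.2]].

Definition distant (P Q : {set T * T}) : bool :=
  [exists a : T, [exists b : T, [exists c : T, [exists d : T,
    [&& admissible a b, admissible c d, cyc a b == P, cyc c d == Q &
        invertible2 a b c d]]]]].

Definition nbrs (P : {set T * T}) : {set {set T * T}} :=
  [set Q in PR | ~~ distant P Q & Q != P].

Definition unit_rep_points : {set {set T * T}} :=
  [set P in PR | [exists a : T, [exists b : T,
     [&& admissible a b, cyc a b == P & unitR a || unitR b]]]].

Definition pairwise_distant (S : {set {set T * T}}) : Prop :=
  forall P Q, P \in S -> Q \in S -> P != Q -> distant P Q.

(* Main.v *)
Require Import Defs.
From mathcomp Require Import all_boot all_order all_algebra.
Import GRing.Theory.
Local Open Scope ring_scope.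
Definition U := (bool * bool * bool)%type.
Definition b2F (b : bool) : 'F_2 := if b then 1 else 0.
Definition emb (u : U) : T :=
  let: (a, b, d) := u in
  \matrix_(i < 2, j < 2) (if i == ord0 then (if j == ord0 then b2F a else b2F b)
                          else (if j == ord0 then 0 else b2F d)).
Definition addU (u v : U) : U :=
  let: (a, b, d) := u in let: (a', b', d') := v in (xorb a a', xorb b b', xorb d d').
Definition mulU (u v : U) : U :=
  let: (a, b, d) := u in let: (a', b', d') := v in
  (a && a', xorb (a && b') (b && d'), d && d').
Lemma emb_mul u v : emb (mulU u v) = emb u * emb v.
Proof.
case: u => [[a b] d]; case: v => [[a' b'] d'].
apply/matrixP => i j; rewrite -mulmxE !mxE big_ord_recr big_ord1 /= !mxE.
case: i => [[|[|?]] ?] //; case: j => [[|[|?]] ?] //=;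
by case: a; case: b; case: d; case: a'; case: b'; case: d'; apply: val_inj.
Qed.
Lemma emb_add u v : emb (addU u v) = emb u + emb v.
Proof.
case: u => [[a b] d]; case: v => [[a' b'] d'].
apply/matrixP => i j; rewrite !mxE.
case: i => [[|[|?]] ?] //; case: j => [[|[|?]] ?] //=;
by case: a; case: b; case: d; case: a'; case: b'; case: d'; apply: val_inj.
Qed.
Definition oneU : U := (true, false, true).
Definition zeroU : U := (false, false, false).
Lemma emb1 : emb oneU = 1.
Proof.
rewrite /oneU.
apply/matrixP => i j; rewrite !mxE.
by case: i => [[|[|?]] ?] //; case: j => [[|[|?]] ?] //=; apply: val_inj.
Qed.
Lemma emb0 : emb zeroU = 0.
Proof.
rewrite /zeroU.
apply/matrixP => i j; rewrite !mxE.
by case: i => [[|[|?]] ?] //; case: j => [[|[|?]] ?] //=; apply: val_inj.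
Qed.

Lemma ord2E (i : 'I_2) : i = ord0 \/ i = ord_max.
Proof. by case: i => [[|[|k]] Hk] //; [left|right]; apply: val_inj. Qed.

Lemma F2E (z : 'F_2) : z = b2F (z == 1).
Proof.
case: z => [[|[|k]] Hk] //.
- by apply: val_inj.
- by apply: val_inj.
Qed.

Lemma upper_emb u : upper (emb u).
Proof. by case: u => [[a b] d]; rewrite /upper mxE. Qed.

Lemma upperP x : upper x -> exists u, x = emb u.
Proof.
rewrite /upper => /eqP H.
exists (x ord0 ord0 == 1, x ord0 ord_max == 1, x ord_max ord_max == 1).
apply/matrixP => i j; rewrite mxE.
by case: (ord2E i) => ->; case: (ord2E j) => -> /=; rewrite -?F2E.
Qed.
Arguments upperP {x}.

Lemma b2F_inj : injective b2F.
Proof. by case; case => // /(congr1 val). Qed.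

Lemma emb_inj : injective emb.
Proof.
move=> [[a b] d] [[a' b'] d'] H.
have H1 := congr1 (fun M : T => M ord0 ord0) H.
have H2 := congr1 (fun M : T => M ord0 ord_max) H.
have H3 := congr1 (fun M : T => M ord_max ord_max) H.
move: H1 H2 H3; rewrite /= !mxE /= => /b2F_inj -> /b2F_inj -> /b2F_inj -> //.
Qed.

Definition bools := [:: true; false].
Definition allU : seq U := [seq (x, y) | x <- [seq (a, b) | a <- bools, b <- bools], y <- bools].
Definition allUU : seq (U * U) := [seq (x, y) | x <- allU, y <- allU].

Lemma mem_allU u : u \in allU.
Proof. by case: u => [[[] []] []]. Qed.
Lemma mem_allUU p : p \in allUU.
Proof. by case: p => x y; apply/allpairsP; exists (x, y); rewrite !mem_allU. Qed.

Definition eqE (x y z w v : U) : bool := addU (mulU x y) (mulU z w) == v.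

Definition inv2Eq (a b c d e f g h : U) : bool :=
  [&& eqE a e b g oneU, eqE a f b h zeroU, eqE c e d g zeroU, eqE c f d h oneU,
      eqE e a f c oneU, eqE e b f d zeroU, eqE g a h c zeroU & eqE g b h d oneU].

Definition inv2U (a b c d : U) : bool :=
  has (fun e => has (fun g =>
    if eqE a e b g oneU && eqE c e d g zeroU then
      has (fun f => has (fun h =>
        [&& eqE a f b h zeroU, eqE c f d h oneU, eqE e a f c oneU,
            eqE e b f d zeroU, eqE g a h c zeroU & eqE g b h d oneU]) allU) allU
    else false) allU) allU.

Definition inv2P (p q : U * U) := inv2U p.1 p.2 q.1 q.2.
Definition admU (p : U * U) : bool := has (fun q => inv2P p q) allUU.
Definition memO (p q : U * U) : bool :=
  has (fun r => (mulU r p.1 == q.1) && (mulU r p.2 == q.2)) allU.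
Definition sameO (p p' : U * U) : bool := all (fun q => memO p q == memO p' q) allUU.
Definition unitU (u : U) : bool := has (fun y => (mulU u y == oneU) && (mulU y u == oneU)) allU.

Definition admList0 := filter admU allUU.
Definition admList := Eval vm_compute in admList0.
Lemma admListE : admList = admList0. Proof. by vm_compute. Qed.

Fixpoint undupR (s : seq (U * U)) : seq (U * U) :=
  if s is x :: s' then (if has (sameO x) s' then undupR s' else x :: undupR s') else [::].
Definition reps := Eval vm_compute in undupR admList.

Lemma emb_eqE x y z w v : (emb x * emb y + emb z * emb w == emb v) = eqE x y z w v.
Proof. by rewrite -!emb_mul -emb_add (inj_eq emb_inj). Qed.

Lemma ifT_false (b y : bool) : b -> y -> (if b then y else false).
Proof. by move=> -> ->. Qed.

Lemma inv2UP a b c d :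
  reflect (exists e f g h, inv2Eq a b c d e f g h) (inv2U a b c d).
Proof.
apply: (iffP idP).
- case/hasP => e _ /hasP [g _]; case: ifP => // /andP [E1 E3] /hasP [f _ /hasP [h _ R]].
  exists e, f, g, h; rewrite /inv2Eq E1 E3 /=.
  by move: R => /and5P [-> -> -> -> /andP [-> ->]].
- case=> e [f [g [h]]].
  rewrite /inv2Eq => /and4P [E1 E2 E3 /and5P [E4 E5 E6 E7 E8]].
  rewrite /inv2U; apply/hasP; exists e; first exact: mem_allU.
  apply/hasP; exists g; first exact: mem_allU.
  apply: ifT_false; first by rewrite E1 E3.
  apply/hasP; exists f; first exact: mem_allU.
  apply/hasP; exists h; first exact: mem_allU.
  by rewrite E2 E4 E5 E6 E7 E8.
Qed.

Lemma inv2_emb a b c d : invertible2 (emb a) (emb b) (emb c) (emb d) = inv2U a b c d.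
Proof.
apply/idP/inv2UP.
- case/existsP => e /existsP [f /existsP [g /existsP [h]]].
  case/and4P => ue uf ug /andP [uh H].
  case: (upperP ue) => e' Ee; case: (upperP uf) => f' Ef.
  case: (upperP ug) => g' Eg; case: (upperP uh) => h' Eh.
  move: H; rewrite Ee Ef Eg Eh -emb1 -emb0 !emb_eqE => H.
  by exists e', f', g', h'.
- case=> e [f [g [h H]]].
  apply/existsP; exists (emb e); apply/existsP; exists (emb f).
  apply/existsP; exists (emb g); apply/existsP; exists (emb h).
  by rewrite !upper_emb -emb1 -emb0 !emb_eqE.
Qed.

Lemma adm_emb a b : admissible (emb a) (emb b) = admU (a, b).
Proof.
rewrite /admissible !upper_emb /=; apply/existsP/hasP.
- case=> c /existsP [d /and3P [uc ud H]].
  case: (upperP uc) => c' Ec; case: (upperP ud) => d' Ed.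
  exists (c', d'); first exact: mem_allUU.
  by move: H; rewrite Ec Ed inv2_emb.
- case=> [[c d]] _ H; exists (emb c); apply/existsP; exists (emb d).
  by rewrite !upper_emb inv2_emb.
Qed.

Lemma mem_admList p : (p \in admList) = admU p.
Proof. by rewrite admListE mem_filter mem_allUU andbT. Qed.

Lemma admissibleP x y : admissible x y ->
  exists p, [/\ x = emb p.1, y = emb p.2 & p \in admList].
Proof.
move=> H; have /and3P [ux uy _] := H.
case: (upperP ux) => a Ea; case: (upperP uy) => b Eb.
exists (a, b); split => //; rewrite mem_admList -adm_emb -Ea -Eb //.
Qed.
Arguments admissibleP {x y}.

Definition C (p : U * U) : {set T * T} := cyc (emb p.1) (emb p.2).

Lemma memC p q : ((emb q.1, emb q.2) \in C p) = memO p q.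
Proof.
apply/imsetP/hasP.
- case=> r ur [E1 E2]; have /upperP [r' Er] : upper r by [].
  exists r'; first exact: mem_allU.
  by rewrite -(inj_eq emb_inj) -[mulU _ _ == _](inj_eq emb_inj) !emb_mul -Er -E1 -E2 !eqxx.
- case=> r _ /andP [/eqP E1 /eqP E2]; exists (emb r); first by rewrite inE upper_emb.
  by rewrite -!emb_mul E1 E2.
Qed.

Lemma memC_emb p x y : (x, y) \in C p -> exists q, x = emb q.1 /\ y = emb q.2.
Proof.
case/imsetP => r ur [-> ->]; have /upperP [r' ->] : upper r by [].
by exists (mulU r' p.1, mulU r' p.2); rewrite !emb_mul.
Qed.
Arguments memC_emb {p x y}.

Lemma C_eq p p' : (C p == C p') = sameO p p'.
Proof.
apply/eqP/allP.
- by move=> E q _; rewrite -!memC E.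
- move=> H; apply/setP => -[x y].
  have key : forall q, ((emb q.1, emb q.2) \in C p) = ((emb q.1, emb q.2) \in C p').
    by move=> q; rewrite !memC; apply/eqP/H/mem_allUU.
  apply/idP/idP => Hm; case: (memC_emb Hm) => q [Ex Ey]; move: Hm; rewrite Ex Ey key //.
Qed.

Lemma reps_adm_chk : all (fun p => p \in admList) reps. Proof. by vm_compute. Qed.
Lemma adm_reps_chk : all (fun p => has (sameO p) reps) admList. Proof. by vm_compute. Qed.
Lemma reps_inj_chk : all (fun p => all (fun q => if sameO p q then p == q else true) reps) reps.
Proof. by vm_compute. Qed.
Lemma reps_uniq : uniq reps. Proof. by vm_compute. Qed.
Lemma inv_inv_chk : all (fun x => all (fun y => if sameO x y then
   all (fun z => (inv2P x z == inv2P y z) && (inv2P z x == inv2P z y)) admList else true)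
   admList) admList.
Proof. by vm_compute. Qed.

Lemma reps_adm p : p \in reps -> p \in admList.
Proof. by move=> Hp; apply: (allP reps_adm_chk). Qed.
Arguments reps_adm {p}.

Lemma C_inj : {in reps &, injective C}.
Proof.
move=> p q Hp Hq /eqP; rewrite C_eq => H.
by have := allP reps_inj_chk p Hp => /allP /(_ q Hq); rewrite H => /eqP.
Qed.

Lemma C_eqr p q : p \in reps -> q \in reps -> (C p == C q) = (p == q).
Proof. by move=> Hp Hq; apply/eqP/eqP => [/C_inj|->] //; apply. Qed.

Lemma inv_inv x y z : x \in admList -> y \in admList -> z \in admList -> sameO x y ->
  inv2P x z = inv2P y z /\ inv2P z x = inv2P z y.
Proof.
move=> Hx Hy Hz Hs.
have := allP inv_inv_chk x Hx => /allP /(_ y Hy); rewrite Hs => /allP /(_ z Hz).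
by case/andP => /eqP -> /eqP ->.
Qed.

Lemma PR_E : PR =i map C reps.
Proof.
move=> P; apply/imsetP/mapP.
- case=> [[x y]] Hxy ->.
  have Ha : admissible x y := Hxy.
  case: (admissibleP Ha) => p [Ex Ey Hp].
  have := allP adm_reps_chk p Hp => /hasP [r Hr Hs].
  exists r => //; rewrite Ex Ey; change (C p = C r); apply/eqP; by rewrite C_eq.
- case=> r Hr ->; exists (emb r.1, emb r.2) => //.
  rewrite inE /= adm_emb -surjective_pairing -mem_admList; exact: reps_adm.
Qed.

Lemma C_PR p : p \in reps -> C p \in PR.
Proof. by move=> Hp; rewrite PR_E map_f. Qed.

Lemma distant_reps p q : p \in reps -> q \in reps -> distant (C p) (C q) = inv2P p q.
Proof.
move=> Hp Hq; apply/idP/idP.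
- case/existsP => a /existsP [b /existsP [c /existsP [d /and5P [Hab Hcd E1 E2 Hinv]]]].
  case: (admissibleP Hab) => p' [Ea Eb Hp']; case: (admissibleP Hcd) => q' [Ec Ed Hq'].
  move: E1 E2 Hinv; rewrite Ea Eb Ec Ed inv2_emb -/(C p') -/(C q') !C_eq => E1 E2 Hinv.
  have [H1 _] := inv_inv _ _ _ Hp' (reps_adm Hp) Hq' E1.
  have [_ H2] := inv_inv _ _ _ Hq' (reps_adm Hq) (reps_adm Hp) E2.
  by rewrite -H2 -H1.
- move=> H; apply/existsP; exists (emb p.1); apply/existsP; exists (emb p.2).
  apply/existsP; exists (emb q.1); apply/existsP; exists (emb q.2).
  rewrite !adm_emb -!surjective_pairing -!mem_admList !reps_adm //= !eqxx /=.
  by rewrite inv2_emb.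
Qed.

Lemma card_reps (S : {set {set T * T}}) (qf : pred (U * U)) :
  (forall P, P \in S -> P \in PR) -> (forall p, p \in reps -> (C p \in S) = qf p) ->
  #|S| = size (filter qf reps).
Proof.
move=> HS Hq.
have -> : #|S| = #|map C (filter qf reps)|.
  apply: eq_card => P; apply/idP/mapP.
  - move=> HP; have := HS P HP; rewrite PR_E => /mapP [r Hr EP].
    by exists r => //; rewrite mem_filter -Hq // -EP HP.
  - by case=> r; rewrite mem_filter => /andP [Hqr Hr] ->; rewrite Hq.
have Hu : uniq (map C (filter qf reps)).
  rewrite map_inj_in_uniq ?filter_uniq ?reps_uniq //.
  by apply: sub_in2 C_inj => x; rewrite mem_filter => /andP [].
by move/card_uniqP: Hu => ->; rewrite size_map.
Qed.

Lemma unitR_emb u : unitR (emb u) = unitU u.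
Proof.
rewrite /unitR upper_emb /=; apply/existsP/hasP.
- case=> y /and3P [uy E1 E2]; case: (upperP uy) => y' Ey.
  exists y'; first exact: mem_allU.
  by move: E1 E2; rewrite Ey -!emb_mul -emb1 !(inj_eq emb_inj) => -> ->.
- case=> y _ /andP [E1 E2]; exists (emb y).
  by rewrite upper_emb -!emb_mul -emb1 !(inj_eq emb_inj) E1 E2.
Qed.

Lemma nbrs_mem p q : p \in reps -> q \in reps ->
  (C q \in nbrs (C p)) = ~~ inv2P p q && (q != p).
Proof.
by move=> Hp Hq; rewrite /nbrs inE C_PR // distant_reps // C_eqr.
Qed.

Lemma nbrs_PR P Q : Q \in nbrs P -> Q \in PR.
Proof. by rewrite inE => /andP []. Qed.

Lemma PR_reps P : P \in PR -> exists2 p, p \in reps & P = C p.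
Proof. by rewrite PR_E => /mapP. Qed.

Definition uqf (p : U * U) : bool :=
  has (fun p' => sameO p' p && (unitU p'.1 || unitU p'.2)) admList.
Definition nq (p q : U * U) : bool := ~~ inv2P p q && (q != p).
Definition triple : seq (U * U) := [:: ((true, true, false), (true, false, true));
        ((true, false, true), (false, true, true));
        ((false, false, true), (true, true, false))].

Lemma chk_i : size reps = 18. Proof. by []. Qed.
Lemma chk_ii : size (filter uqf reps) = 14. Proof. by vm_compute. Qed.
Lemma chk_iii : all (fun p => size (filter (nq p) reps) == 9) reps.
Proof. by vm_compute. Qed.
Lemma chk_iv : all (fun p => all (fun q => if inv2P p q then
   size (filter (fun r => nq p r && nq q r) reps) == 4 else true) reps) reps.
Proof. by vm_compute. Qed.
Lemma chk_v : all (fun p => all (fun q => if inv2P p q then all (fun s =>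
   if inv2P p s && inv2P q s then
   size (filter (fun r => nq p r && nq q r && nq s r) reps) == 0 else true) reps
   else true) reps) reps.
Proof. by vm_compute. Qed.
Lemma chk_t : [&& all (fun a => a \in reps) triple, uniq triple &
   all (fun a => all (fun b => if a != b then inv2P a b else true) triple) triple].
Proof. by vm_compute. Qed.
Lemma chk4 : all (fun a => all (fun b => if (a != b) && inv2P a b then
   all (fun c => if [&& a != c, b != c, inv2P a c & inv2P b c] then
   all (fun d => ~~ [&& a != d, b != d, c != d, inv2P a d, inv2P b d & inv2P c d]) reps
   else true) reps else true) reps) reps.
Proof. by vm_compute. Qed.

Lemma no4 s : {subset s <= reps} -> uniq s ->
  (forall x y, x \in s -> y \in s -> x != y -> inv2P x y) -> (size s <= 3)%N.
Proof.
case: s => [|a [|b [|c [|d r]]]] // Hsub Hu Hd; exfalso.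
have Ma : a \in [:: a, b, c, d & r] by rewrite !inE eqxx ?orbT.
have Mb : b \in [:: a, b, c, d & r] by rewrite !inE eqxx ?orbT.
have Mc : c \in [:: a, b, c, d & r] by rewrite !inE eqxx ?orbT.
have Md : d \in [:: a, b, c, d & r] by rewrite !inE eqxx ?orbT.
have nab : a != b by apply: contraTneq Hu => ->; rewrite /= !inE !eqxx ?orbT.
have nac : a != c by apply: contraTneq Hu => ->; rewrite /= !inE !eqxx ?orbT.
have nad : a != d by apply: contraTneq Hu => ->; rewrite /= !inE !eqxx ?orbT.
have nbc : b != c by apply: contraTneq Hu => ->; rewrite /= !inE !eqxx ?orbT ?andbF.
have nbd : b != d by apply: contraTneq Hu => ->; rewrite /= !inE !eqxx ?orbT ?andbF.
have ncd : c != d by apply: contraTneq Hu => ->; rewrite /= !inE !eqxx ?orbT ?andbF.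
have := allP chk4 a (Hsub a Ma) => /allP /(_ b (Hsub b Mb)).
rewrite nab (Hd a b) // => /allP /(_ c (Hsub c Mc)).
rewrite nac nbc (Hd a c) // (Hd b c) // => /allP /(_ d (Hsub d Md)).
by rewrite nad nbd ncd (Hd a d) // (Hd b d) // (Hd c d).
Qed.


Theorem mainTheorem3 :
  (* (i) *) #|PR| = 18%N /\
  (* (ii) *) #|unit_rep_points| = 14%N /\
  (* (iii) *) (forall P, P \in PR -> #|nbrs P| = 9%N) /\
  (* (iv) *) (forall P Q, P \in PR -> Q \in PR -> distant P Q ->
                #|nbrs P :&: nbrs Q| = 4%N) /\
  (* (v) *) (forall P Q S, P \in PR -> Q \in PR -> S \in PR ->
                distant P Q -> distant P S -> distant Q S ->
                nbrs P :&: nbrs Q :&: nbrs S = set0) /\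
  (* (vi) *) ((exists S : {set {set T * T}},
                 [/\ S \subset PR, pairwise_distant S & #|S| = 3%N]) /\
              (forall S : {set {set T * T}},
                 S \subset PR -> pairwise_distant S -> (#|S| <= 3)%N)).
Proof.
split.
  rewrite (@card_reps PR predT) //; last by move=> p Hp; rewrite C_PR.
split.
  rewrite (@card_reps unit_rep_points uqf); first exact: chk_ii.
    by move=> P; rewrite inE => /andP [].
  move=> p Hp; rewrite inE C_PR //=.
  apply/existsP/hasP.
  - case=> a /existsP [b /and3P [Hab E Hu]].
    case: (admissibleP Hab) => p' [Ea Eb Hp']; exists p' => //.
    by move: E Hu; rewrite Ea Eb !unitR_emb -/(C p') C_eq => -> ->.
  - case=> p' Hp' /andP [Hs Hu]; exists (emb p'.1).
    apply/existsP; exists (emb p'.2).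
    by rewrite adm_emb -surjective_pairing -mem_admList Hp' -/(C p') C_eq Hs !unitR_emb Hu.
split.
  move=> P /PR_reps [p Hp ->].
  rewrite (@card_reps (nbrs (C p)) (nq p)); first exact/eqP/(allP chk_iii p Hp).
    exact: nbrs_PR.
  by move=> q Hq; rewrite nbrs_mem.
split.
  move=> P Q /PR_reps [p Hp ->] /PR_reps [q Hq ->]; rewrite distant_reps // => Hd.
  rewrite (@card_reps _ (fun r => nq p r && nq q r)).
  - have := allP chk_iv p Hp => /allP /(_ q Hq); rewrite Hd => /eqP //.
  - by move=> R; rewrite inE => /andP [/nbrs_PR].
  - by move=> r Hr; rewrite inE !nbrs_mem.
split.
  move=> P Q S /PR_reps [p Hp ->] /PR_reps [q Hq ->] /PR_reps [s Hs ->].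
  rewrite !distant_reps // => Hpq Hps Hqs.
  apply: cards0_eq.
  rewrite (@card_reps _ (fun r => nq p r && nq q r && nq s r)).
  - have := allP chk_v p Hp => /allP /(_ q Hq); rewrite Hpq => /allP /(_ s Hs).
    by rewrite Hps Hqs => /eqP.
  - by move=> R; rewrite in_setI => /andP [_ /nbrs_PR].
  - by move=> r Hr; rewrite !in_setI !nbrs_mem.
case/and3P: chk_t => Ht Hut Hdt.
have Htr : {subset triple <= reps} by move=> x; apply: (allP Ht).
split.
  exists [set P in map C triple]; split.
  - apply/subsetP => P; rewrite in_set => /mapP [r Hr ->]; exact: C_PR (Htr _ Hr).
  - move=> P Q; rewrite !in_set => /mapP [a Ha ->] /mapP [b Hb ->] Hne.
    rewrite distant_reps ?Htr //.
    have := allP Hdt a Ha => /allP /(_ b Hb).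
    have nab : a != b by apply: contraNneq Hne => ->.
    by rewrite nab.
  - rewrite cardsE.
    have Hu : uniq (map C triple).
      by rewrite map_inj_in_uniq //; apply: sub_in2 C_inj.
    by move/card_uniqP: Hu => ->; rewrite size_map.
move=> S HS Hpd.
rewrite (@card_reps S (fun p => C p \in S)) //; last by move=> P; apply: (subsetP HS).
apply: no4.
- by move=> x; rewrite mem_filter => /andP [].
- by rewrite filter_uniq ?reps_uniq.
- move=> x y; rewrite !mem_filter => /andP [Sx Rx] /andP [Sy Ry] Hxy.
  rewrite -distant_reps //; apply: Hpd => //.
  by rewrite C_eqr.
Qed.
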